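(* Let $L$ be a Latin array of order $n$ that has a diagonal of weight $n-2$ and has no diagonal of weight greater than $n-2$. If $L$ has a diagonal of type B, then there exists a diagonal of type A that can be reached from it by a sequence of $\#$-swaps.
   Context: A Latin array of order $n$ is an $n\times n$ matrix each of whose cells contains a symbol (from an arbitrary set of symbols), such that no symbol occurs more than once in any row or in any column. A diagonal of an $n\times n$ array is a selection of $n$ cells, one from each row and one from each column; its weight is the number of distinct symbols on it. A diagonal of weight $n-2$ is of type A if two symbols each occur exactly twice on it (all others once), and of type B if one symbol occurs exactly three times on it (all others once). A $\#$-swap is the following operation: given a diagonal $T$ of weight $w$ and two of its cells $(i_0,j_0)$ and $(i_1,j_1)$ such that the remaining $n-2$ cells of $T$ still carry $w$ distinct symbols, replace these two cells by $(i_0,j_1)$ and $(i_1,j_0)$, obtaining a new diagonal (of weight at least $w$). *)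

(* Defs.v *)
From mathcomp Require Import all_boot all_order all_fingroup.
From Stdlib Require Import Relation_Operators.
Set Implicit Arguments. Unset Strict Implicit. Unset Printing Implicit Defensive.

Definition latin_array (T : eqType) (n : nat) (L : 'I_n -> 'I_n -> T) : Prop :=
  (forall i j1 j2, L i j1 = L i j2 -> j1 = j2) /\
  (forall i1 i2 j, L i1 j = L i2 j -> i1 = i2).

(* A diagonal is given by a permutation s: its cells are (i, s i). *)
Definition diag_symbols (T : eqType) (n : nat) (L : 'I_n -> 'I_n -> T)
  (s : 'S_n) : seq T := [seq L i (s i) | i <- enum 'I_n].

Definition weight (T : eqType) (n : nat) (L : 'I_n -> 'I_n -> T) (s : 'S_n) : nat :=
  size (undup (diag_symbols L s)).

Definition typeA (T : eqType) (n : nat) (L : 'I_n -> 'I_n -> T) (s : 'S_n) : Prop :=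
  weight L s = n - 2 /\
  exists a b : T, a != b /\
    count_mem a (diag_symbols L s) = 2 /\ count_mem b (diag_symbols L s) = 2 /\
    forall x, x \in diag_symbols L s -> x != a -> x != b ->
      count_mem x (diag_symbols L s) = 1.

Definition typeB (T : eqType) (n : nat) (L : 'I_n -> 'I_n -> T) (s : 'S_n) : Prop :=
  weight L s = n - 2 /\
  exists a : T,
    count_mem a (diag_symbols L s) = 3 /\
    forall x, x \in diag_symbols L s -> x != a ->
      count_mem x (diag_symbols L s) = 1.

(* A #-swap from diagonal s (cells (i0, s i0), (i1, s i1)) to diagonal s'
   (cells (i0, s i1), (i1, s i0)), allowed when the remaining n-2 cells of s
   still carry weight(s) distinct symbols. *)
Definition hash_swap (T : eqType) (n : nat) (L : 'I_n -> 'I_n -> T)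
  (s s' : 'S_n) : Prop :=
  exists i0 i1 : 'I_n, i0 != i1 /\
    size (undup [seq L i (s i) | i <- enum 'I_n & (i != i0) && (i != i1)])
      = weight L s /\
    forall i, s' i = s (tperm i0 i1 i).

Definition hash_reachable (T : eqType) (n : nat) (L : 'I_n -> 'I_n -> T) :
  'S_n -> 'S_n -> Prop := @clos_refl_trans _ (hash_swap L).

(* Main.v *)
Require Import Defs.
From mathcomp Require Import all_boot all_order all_fingroup.
From Stdlib Require Import Relation_Operators.
From mathcomp Require Import zify.

Lemma cntE (T : eqType) n (L : 'I_n -> 'I_n -> T) (s : 'S_n) y :
  count_mem y (diag_symbols L s) = \sum_(r < n) (L r (s r) == y).
Proof.
rewrite /diag_symbols count_map -sum1_count big_mkcond /= big_enum /=.
by apply: eq_bigr => r _; case: (_ == _).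
Qed.

Lemma memC (T : eqType) (y : T) (s : seq T) : (y \in s) = (0 < count_mem y s).
Proof. by rewrite -has_pred1 has_count. Qed.

Section Walk.
Variables (T : eqType) (n : nat) (L : 'I_n -> 'I_n -> T).
Hypothesis HL : latin_array L.
Hypothesis Hmax : forall s : 'S_n, weight L s <= n - 2.

Notation dg s := (diag_symbols L s).

Lemma mem_dg (s : 'S_n) r : L r (s r) \in dg s.
Proof. by apply: map_f; rewrite mem_enum. Qed.

Lemma dgP (s : 'S_n) y : y \in dg s -> exists r, y = L r (s r).
Proof. by case/mapP => r _ ->; exists r. Qed.

Lemma weight_sub (s s' : 'S_n) : {subset dg s <= dg s'} -> weight L s <= weight L s'.
Proof.
move=> H; rewrite /weight; apply: uniq_leq_size; first exact: undup_uniq.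
by move=> y; rewrite !mem_undup; apply: H.
Qed.

Lemma weight_new (s s' : 'S_n) x : {subset dg s <= dg s'} -> x \in dg s' ->
  x \notin dg s -> weight L s < weight L s'.
Proof.
move=> H Hx Hn; rewrite /weight.
have -> : (size (undup (dg s))).+1 = size (undup (x :: dg s)) by rewrite /= (negbTE Hn).
apply: uniq_leq_size; first exact: undup_uniq.
move=> y; rewrite !mem_undup in_cons => /orP [/eqP -> //|]; exact: H.
Qed.

Lemma split2 (F : 'I_n -> nat) i k : i != k ->
  \sum_(r < n) F r = F i + (F k + \sum_(r < n | (r != i) && (r != k)) F r).
Proof. by move=> ik; rewrite (bigD1 i) // (bigD1 k) 1?eq_sym. Qed.

Lemma swap_count (s : 'S_n) i k y : i != k ->
  count_mem y (dg (tperm i k * s)%g) + (L i (s i) == y) + (L k (s k) == y) =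
  count_mem y (dg s) + (L i (s k) == y) + (L k (s i) == y).
Proof.
move=> ik; rewrite !cntE !(split2 _ _ _ ik) !permM tpermL tpermR.
have E : \sum_(r < n | (r != i) && (r != k)) (L r ((tperm i k * s)%g r) == y) =
  \sum_(r < n | (r != i) && (r != k)) (L r (s r) == y).
  by apply: eq_bigr => r /andP [ri rk]; rewrite permM tpermD // eq_sym.
rewrite E.
lia.
Qed.

Lemma eqP_neq_sym {U : eqType} {u v : U} : u != v -> v != u.
Proof. by rewrite eq_sym. Qed.

Definition B' (s : 'S_n) a := weight L s = n - 2 /\ count_mem a (dg s) = 3 /\
  forall y, y \in dg s -> y != a -> count_mem y (dg s) = 1.


Lemma step (s : 'S_n) i j k : i != j -> i != k -> j != k ->
  L j (s j) = L i (s i) -> L k (s k) = L i (s i) -> B' s (L i (s i)) ->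
  [/\ hash_swap L s (tperm i k * s)%g, L i (s k) \in dg s,
      L i (s k) != L i (s i),
      (L i (s k) != L k (s i) -> typeA L (tperm i k * s)%g) &
      (L i (s k) = L k (s i) -> B' (tperm i k * s)%g (L i (s k)))].
Proof.
move=> ij ik jk Hj Hk [Hw [Ha H1]].
have [Lr Lc] := HL.
have SC : forall y, count_mem y (dg (tperm i k * s)%g) + (L i (s i) == y) + (L i (s i) == y)
   = count_mem y (dg s) + (L i (s k) == y) + (L k (s i) == y).
  by move=> y; have := swap_count s i k y ik; rewrite Hk.
have xa : L i (s k) != L i (s i).
  apply/eqP => E; have := Lc i k (s k) (etrans E (esym Hk)); by move/eqP: ik.
have x'a : L k (s i) != L i (s i).
  apply/eqP => E; have := Lc k i (s i) E => ki; by move: ik; rewrite ki eqxx.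
have sub : {subset dg s <= dg (tperm i k * s)%g}.
  move=> y Hy; rewrite memC; have := SC y.
  case: (eqVneq (L i (s i)) y) => [<-|ay].
    rewrite Ha (negbTE xa) (negbTE x'a) /=; lia.
  rewrite memC in Hy; move: Hy; lia.
have xin' : L i (s k) \in dg (tperm i k * s)%g.
  by have := mem_dg (tperm i k * s)%g i; rewrite permM tpermL.
have x'in' : L k (s i) \in dg (tperm i k * s)%g.
  by have := mem_dg (tperm i k * s)%g k; rewrite permM tpermR.
have Hw' : weight L (tperm i k * s)%g = n - 2.
  apply/eqP; rewrite eqn_leq Hmax /= -Hw; exact: weight_sub.
have xin : L i (s k) \in dg s.
  apply/negPn/negP => Hn; have := weight_new _ _ _ sub xin' Hn; by rewrite Hw Hw' ltnn.
have x'in : L k (s i) \in dg s.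
  apply/negPn/negP => Hn; have := weight_new _ _ _ sub x'in' Hn; by rewrite Hw Hw' ltnn.
have Cx := H1 _ xin xa.
have Cx' := H1 _ x'in x'a.
have others : forall y, y \in dg (tperm i k * s)%g -> y != L i (s k) -> y != L k (s i) ->
    count_mem y (dg (tperm i k * s)%g) = 1.
  move=> y Hy yx yx'; have := SC y; rewrite [L i (s k) == y]eq_sym (negbTE yx) [L k (s i) == y]eq_sym (negbTE yx').
  case: (eqVneq (L i (s i)) y) => [<-|ay].
    rewrite Ha /=; move=> E; lia.
  move=> E; rewrite /= !addn0 in E.
  have Hy0 : y \in dg s by rewrite memC -E -memC.
  rewrite E; rewrite eq_sym in ay; exact: H1 _ Hy0 ay.
split=> //.
- exists i, k; split=> //; split; last by move=> r; rewrite permM.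
  rewrite /weight; apply/eqP; rewrite eqn_leq; apply/andP; split;
    (apply: uniq_leq_size; first exact: undup_uniq); move=> y; rewrite !mem_undup.
    by case/mapP => r _ ->; exact: mem_dg.
  have mR : forall r, r != i -> r != k ->
      L r (s r) \in [seq L i0 (s i0) | i0 <- enum 'I_n & (i0 != i) && (i0 != k)].
    by move=> r ri rk; apply: map_f; rewrite mem_filter ri rk mem_enum.
  case/mapP => r _ ->.
  case: (eqVneq r i) => [->|ri]; first by rewrite -Hj; apply: mR; rewrite // eq_sym.
  case: (eqVneq r k) => [->|rk]; first by rewrite Hk -Hj; apply: mR; rewrite // eq_sym.
  exact: mR.
- move=> xx'; split=> //; exists (L i (s k)), (L k (s i)); split=> //; split; [|split].
  + have := SC (L i (s k)); rewrite (negbTE (eqP_neq_sym xa)) eqxx eq_sym (negbTE xx') Cx; lia.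
  + have := SC (L k (s i)); rewrite (negbTE (eqP_neq_sym x'a)) eqxx (negbTE xx') Cx'; lia.
  + exact: others.
- move=> xx'; split=> //; split.
  + have := SC (L i (s k)); rewrite (negbTE (eqP_neq_sym xa)) eqxx -xx' eqxx Cx; lia.
  + by move=> y Hy yx; apply: others => //; rewrite -xx'.
Qed.

Lemma walk i m : forall (s : 'S_n) j k (Q : seq 'I_n), n <= size Q + m ->
  uniq (i :: j :: k :: Q) ->
  L j (s j) = L i (s i) -> L k (s k) = L i (s i) -> B' s (L i (s i)) ->
  (forall r, r \in Q -> exists2 z, z \in j :: Q & L r (s r) = L i (s z)) ->
  exists t, typeA L t /\ hash_reachable L s t.
Proof.
have [Lr Lc] := HL.
elim: m => [|m IH] s j k Q Hsz Hu Hj Hk HB HQ.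
  move/card_uniqP: Hu => h2; have := max_card (mem (i :: j :: k :: Q)).
  rewrite card_ord h2 /= => h; move: Hsz; clear -h; lia.
move: (Hu) => /= /andP [iN /andP [jN /andP [kQ uQ]]].
move: iN jN; rewrite !inE !negb_or => /and3P [ij ik iQ] /andP [jk jQ].
have [Hsw xin xa HA HBB] := step s i j k ij ik jk Hj Hk HB.
case: (eqVneq (L i (s k)) (L k (s i))) => [xx'|xx']; last first.
  exists (tperm i k * s)%g; split; [exact: HA | exact: rt_step].
have [r Er] := dgP _ _ xin.
have ri : r != i by apply/eqP => E; move: xa; rewrite Er E eqxx.
have rj : r != j by apply/eqP => E; move: xa; rewrite Er E Hj eqxx.
have rk : r != k by apply/eqP => E; move: xa; rewrite Er E Hk eqxx.
have rQ : r \notin Q.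
  apply/negP => rq; have [z zin Ez] := HQ r rq.
  have := Lr i _ _ (etrans (esym Ez) (esym Er)) => /perm_inj zk.
  by move: zin; rewrite zk inE (negbTE (eqP_neq_sym jk)) (negbTE kQ).
pose s' := (tperm i k * s)%g.
have ps'k : s' k = s i by rewrite permM tpermR.
have ps'i : s' i = s k by rewrite permM tpermL.
have ps'o : forall q, q != i -> q != k -> s' q = s q.
  by move=> q qi qk; rewrite permM tpermD // eq_sym.
have [|||||| t [Ht Hr]] := IH s' k r (j :: Q).
- by rewrite /=; move: Hsz; clear; lia.
- rewrite /= !inE !negb_or ik (eqP_neq_sym ri) ij iQ (eqP_neq_sym rk) (eqP_neq_sym jk) kQ.
  by rewrite rj rQ jQ uQ.
- by rewrite ps'k ps'i; exact: esym xx'.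
- by rewrite ps'o // ps'i; exact: esym Er.
- by rewrite ps'i; exact: HBB.
- move=> q; rewrite inE => /orP [/eqP -> | qQ].
    exists k; first by rewrite inE eqxx.
    by rewrite ps'o ?ps'k ?Hj // eq_sym.
  have [z zin Ez] := HQ q qQ.
  exists z; first by rewrite inE zin orbT.
  have qi : q != i by apply/eqP => e; move: iQ; rewrite -e qQ.
  have qk : q != k by apply/eqP => e; move: kQ; rewrite -e qQ.
  have zi : z != i by apply/eqP => e; move: zin; rewrite e inE (negbTE ij) (negbTE iQ).
  have zk : z != k by apply/eqP => e; move: zin; rewrite e inE (negbTE (eqP_neq_sym jk)) (negbTE kQ).
  by rewrite !ps'o.
exists t; split=> //; apply: rt_trans; [apply: rt_step; exact: Hsw | exact: Hr].
Qed.

End Walk.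

Theorem lemma2p2 (T : eqType) (n : nat) (L : 'I_n -> 'I_n -> T) :
  latin_array L ->
  (exists s : 'S_n, weight L s = n - 2) ->
  (forall s : 'S_n, weight L s <= n - 2) ->
  forall s : 'S_n, typeB L s ->
  exists t : 'S_n, typeA L t /\ hash_reachable L s t.
Proof.
move=> HL _ Hmax s [Hw [a [Ha H1]]].
pose A := [set r | L r (s r) == a].
have cA : #|A| = 3.
  rewrite -Ha cntE -sum1_card big_mkcond /=; apply: eq_bigr => r _.
  by rewrite inE; case: eqP.
have mA : forall r, r \in enum A -> L r (s r) = a by move=> r; rewrite mem_enum inE => /eqP.
have uA := enum_uniq (mem A).
rewrite cardE in cA.
move: uA mA; case: (enum A) cA => [|i [|j [|k [|? ?]]]] //= _.
rewrite !inE !negb_or => /and3P [/andP [ij ik] jk _] mA.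
have Hi := mA i; have Hj := mA j; have Hk := mA k.
rewrite !inE !eqxx ?orbT in Hi Hj Hk.
have Hi' := Hi isT; have Hj' := Hj isT; have Hk' := Hk isT.
apply: (@walk _ _ _ HL Hmax i n s j k [::]).
- by rewrite /= add0n.
- by rewrite /= !inE !negb_or ij ik jk.
- by rewrite Hj' Hi'.
- by rewrite Hk' Hi'.
- by rewrite Hi'; split=> //; split=> //; move=> y Hy; exact: H1.
- by [].
Qed.
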